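(* For every integer $n \ge 5$, there exists an extremal point of $\Gamma(n)$ of rank $n$; hence $MR(n) \ge n$.
   Context: A state $\rho$ on $M_n(\mathbb{C}) \otimes M_n(\mathbb{C})$ is a marginal tracial state if $\rho(A\otimes I) = \mathrm{tr}(A)$ and $\rho(I \otimes B) = \mathrm{tr}(B)$ for all $A,B \in M_n(\mathbb{C})$, where $\mathrm{tr}$ is the normalized trace. $\Gamma(n)$ is the convex set of all marginal tracial states on $M_n(\mathbb{C}) \otimes M_n(\mathbb{C})$. For a state $\rho$, $\mathrm{rank}(\rho)$ is the rank of its density matrix. $MR(n)$ denotes the maximum of $\mathrm{rank}(\rho)$ over all extremal points $\rho$ of $\Gamma(n)$. *)

(* Defs.v *)
From HB Require Import structures.
From mathcomp Require Import all_boot all_order all_algebra.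
Set Implicit Arguments. Unset Strict Implicit. Unset Printing Implicit Defensive.
Import Order.TTheory GRing.Theory Num.Theory.
Local Open Scope ring_scope.
Local Open Scope sesquilinear_scope.

(* Decomposition of an index of C^n (x) C^n = C^(n*n) into a pair of indices
   (the same fixed bijection as the one underlying mxvec). *)
Definition tidx (n : nat) (k : 'I_(n * n)) : 'I_n * 'I_n :=
  enum_val (cast_ord (esym (mxvec_cast n n)) k).

Definition kron (C : numClosedFieldType) (n : nat) (A B : 'M[C]_n) : 'M[C]_(n * n) :=
  \matrix_(k, l) (A (tidx k).1 (tidx l).1 * B (tidx k).2 (tidx l).2).

Definition psd (C : numClosedFieldType) (m : nat) (M : 'M[C]_m) : Prop :=
  M ^t* = M /\ forall v : 'cV[C]_m, 0 <= ((v ^t* *m M *m v) 0 0).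

(* Density matrix of a state on M_n(C) (x) M_n(C): the state is X |-> \tr (D X). *)
Definition density (C : numClosedFieldType) (m : nat) (D : 'M[C]_m) : Prop :=
  psd D /\ \tr D = 1.

Definition ntr (C : numClosedFieldType) (n : nat) (A : 'M[C]_n) : C :=
  \tr A / n%:R.

(* D is (the density matrix of) an element of Gamma(n): a marginal tracial state. *)
Definition in_Gamma (C : numClosedFieldType) (n : nat) (D : 'M[C]_(n * n)) : Prop :=
  density D /\
  (forall A : 'M[C]_n, \tr (D *m kron A 1%:M) = ntr A) /\
  (forall B : 'M[C]_n, \tr (D *m kron 1%:M B) = ntr B).

Definition extremal_Gamma (C : numClosedFieldType) (n : nat) (D : 'M[C]_(n * n)) : Prop :=
  in_Gamma D /\
  forall (D1 D2 : 'M[C]_(n * n)) (t : C),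
    in_Gamma D1 -> in_Gamma D2 -> 0 < t -> t < 1 ->
    D = t *: D1 + (1 - t) *: D2 -> D1 = D /\ D2 = D.

(* Main.v *)
Require Import Defs.
From HB Require Import structures.
From mathcomp Require Import all_boot all_order all_algebra.
Set Implicit Arguments. Unset Strict Implicit. Unset Printing Implicit Defensive.
Import Order.TTheory GRing.Theory Num.Theory.
Local Open Scope ring_scope.
Local Open Scope sesquilinear_scope.


Definition pidx (n : nat) (x : 'I_n * 'I_n) : 'I_(n * n) :=
  cast_ord (mxvec_cast n n) (enum_rank x).

Lemma tidxK n (p : 'I_(n*n)) : pidx (tidx p) = p.
Proof. by rewrite /pidx /tidx enum_valK cast_ordKV. Qed.

Lemma pidxK n (x : 'I_n * 'I_n) : tidx (pidx x) = x.
Proof. by rewrite /pidx /tidx cast_ordK enum_rankK. Qed.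

Lemma sum_pidx (R : nmodType) n (F : 'I_(n*n) -> R) :
  \sum_p F p = \sum_a \sum_b F (pidx (a, b)).
Proof.
rewrite (reindex (@pidx n)) /=; last first.
  by exists (@tidx n) => x _; [rewrite pidxK | rewrite tidxK].
by rewrite pair_big; apply: eq_bigr => -[a b].
Qed.

Lemma kronE (C : numClosedFieldType) n (A B : 'M[C]_n) a b a' b' :
  kron A B (pidx (a, b)) (pidx (a', b')) = A a a' * B b b'.
Proof. by rewrite /kron mxE !pidxK. Qed.


Section S.
Variable C : numClosedFieldType.

Definition T2 n (M : 'M[C]_(n*n)) (a a' : 'I_n) : C :=
  \sum_b M (pidx (a, b)) (pidx (a', b)).
Definition T1 n (M : 'M[C]_(n*n)) (b b' : 'I_n) : C :=
  \sum_a M (pidx (a, b)) (pidx (a, b')).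

Lemma trM n (M K : 'M[C]_(n*n)) :
  \tr (M *m K) = \sum_a \sum_b \sum_a' \sum_b' M (pidx (a,b)) (pidx (a',b')) * K (pidx (a',b')) (pidx (a,b)).
Proof.
rewrite /mxtrace sum_pidx; apply: eq_bigr => a _; apply: eq_bigr => b _.
by rewrite mxE sum_pidx.
Qed.

Lemma trK1 n (M : 'M[C]_(n*n)) A :
  \tr (M *m kron A 1%:M) = \sum_a \sum_a' A a' a * T2 M a a'.
Proof.
rewrite trM; apply: eq_bigr => a _.
rewrite exchange_big; apply: eq_bigr => a' _.
rewrite /T2 mulr_sumr; apply: eq_bigr => b _.
rewrite (bigD1 b) //= big1 ?addr0; last first.
  by move=> b' nb; rewrite kronE mxE (negbTE nb) mulr0 mulr0.
by rewrite kronE mxE eqxx mulr1 mulrC.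
Qed.

Lemma trK2 n (M : 'M[C]_(n*n)) B :
  \tr (M *m kron 1%:M B) = \sum_b \sum_b' B b' b * T1 M b b'.
Proof.
rewrite trM exchange_big; apply: eq_bigr => b _.
rewrite (eq_bigr (fun a => \sum_b' M (pidx (a,b)) (pidx (a,b')) * B b' b)); last first.
  move=> a _; rewrite (bigD1 a) //= [X in _ + X]big1 ?addr0.
    by apply: eq_bigr => b' _; rewrite kronE mxE eqxx mul1r.
  move=> a' na; rewrite big1 // => b' _.
  by rewrite kronE mxE (negbTE na) mul0r mulr0.
rewrite exchange_big; apply: eq_bigr => b' _.
by rewrite /T1 mulr_sumr; apply: eq_bigr => a _; rewrite mulrC.
Qed.

Lemma tr_delta n (i j : 'I_n) : \tr (delta_mx i j : 'M[C]_n) = (i == j)%:R.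
Proof.
rewrite /mxtrace (bigD1 i) //= big1 ?addr0; first by rewrite mxE eqxx.
by move=> k /negbTE nk; rewrite mxE nk.
Qed.

Lemma Gamma_T2 n (M : 'M[C]_(n*n)) : in_Gamma M ->
  forall i j : 'I_n, T2 M j i = (i == j)%:R / n%:R.
Proof.
move=> [_ [H1 _]] i j; move: (H1 (delta_mx i j)); rewrite trK1 /ntr tr_delta.
move=> <-; rewrite (bigD1 j) //= [X in _ + X]big1 ?addr0; last first.
  move=> a na; rewrite big1 // => a' _; rewrite mxE (negbTE na) andbF mul0r //.
rewrite (bigD1 i) //= [X in _ + X]big1 ?addr0; first by rewrite mxE !eqxx mul1r.
by move=> a na; rewrite mxE (negbTE na) mul0r.
Qed.

Lemma Gamma_T1 n (M : 'M[C]_(n*n)) : in_Gamma M ->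
  forall i j : 'I_n, T1 M j i = (i == j)%:R / n%:R.
Proof.
move=> [_ [_ H1]] i j; move: (H1 (delta_mx i j)); rewrite trK2 /ntr tr_delta.
move=> <-; rewrite (bigD1 j) //= [X in _ + X]big1 ?addr0; last first.
  move=> a na; rewrite big1 // => a' _; rewrite mxE (negbTE na) andbF mul0r //.
rewrite (bigD1 i) //= [X in _ + X]big1 ?addr0; first by rewrite mxE !eqxx mul1r.
by move=> a na; rewrite mxE (negbTE na) mul0r.
Qed.

End S.


Definition supp m (x : 'I_m.+2 * 'I_m.+2) : bool :=
  if x.1 == x.2 then x.1 != ord0 else (x.1 == ord0) || (x.2 == ord0).
Definition colo m (x : 'I_m.+2 * 'I_m.+2) : 'I_m.+2 :=
  if x.1 == ord0 then x.2 else if x.2 == ord0 then x.1 else ord0.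

Lemma inj2 m (x y : 'I_m.+2 * 'I_m.+2) :
  supp x -> supp y -> colo x = colo y -> x.2 = y.2 -> x = y.
Proof.
case: x y => [a b] [a' b'] /=; rewrite /supp /colo /= => + + + eb; subst b'.
by do ![case: eqP => /= [?|?]; subst] => //; try congruence.
Qed.

Lemma inj1 m (x y : 'I_m.+2 * 'I_m.+2) :
  supp x -> supp y -> colo x = colo y -> x.1 = y.1 -> x = y.
Proof.
case: x y => [a b] [a' b'] /=; rewrite /supp /colo /= => + + + eb; subst a'.
by do ![case: eqP => /= [?|?]; subst] => //; try congruence.
Qed.

Lemma supp_swap m (a b : 'I_m.+2) : supp (b, a) = supp (a, b).
Proof. by rewrite /supp /= [b == a]eq_sym; case: (a =P b) => [->|] //; rewrite orbC. Qed.

Lemma colo_swap m (a b : 'I_m.+2) : colo (b, a) = colo (a, b).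
Proof.
rewrite /colo /=; case: (b =P ord0) => [eb|nb]; case: (a =P ord0) => [ea|na] //.
by rewrite ea eb.
Qed.

Section D.
Variable C : numClosedFieldType.
Variable m : nat.
Local Notation N := m.+2.

Definition beta : C := ((N%:R : C) * (m.+1)%:R)^-1.
Definition alpha : C := m%:R * beta.
Definition lam (k : 'I_N) : C := if k == ord0 then alpha else beta.
Definition Dent (x y : 'I_N * 'I_N) : C :=
  if [&& supp x, supp y & colo x == colo y] then lam (colo x) else 0.
Definition Dm : 'M[C]_(N * N) := \matrix_(p, q) Dent (tidx p) (tidx q).

Lemma DmE x y : Dm (pidx x) (pidx y) = Dent x y.
Proof. by rewrite mxE !pidxK. Qed.

Lemma beta_sum : (m.+1)%:R * beta = N%:R^-1.
Proof.
rewrite /beta invfM mulrA mulrC mulrA mulVf ?mul1r //.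
by rewrite pnatr_eq0.
Qed.

Lemma alpha_beta : alpha + beta = N%:R^-1.
Proof. by rewrite /alpha -{2}(mul1r beta) -mulrDl natr1 beta_sum. Qed.

Lemma Dent_xx x : Dent x x = if supp x then lam (colo x) else 0.
Proof. by rewrite /Dent eqxx andbT andbb. Qed.

Lemma Dent_diag_sum (a : 'I_N) : \sum_b Dent (a, b) (a, b) = N%:R^-1.
Proof.
under eq_bigr do rewrite Dent_xx.
have [->|na] := eqVneq a ord0.
  rewrite big_ord_recl /= /supp /=.
  rewrite (eq_bigr (fun _ => beta)); last first.
    by move=> i _; rewrite /lam /colo /=.
  by rewrite add0r sumr_const card_ord -[beta *+ _]mulr_natl beta_sum.
rewrite (bigD1 a) //= (bigD1 ord0) 1?eq_sym //= big1.
  rewrite /supp /colo /lam /= !eqxx !(negbTE na) /= ?eqxx ?(negbTE na).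
  by rewrite addr0 alpha_beta.
- move=> b /andP [nba nb0]; rewrite /supp /= eq_sym (negbTE nba) (negbTE na).
  by rewrite (negbTE nb0).
Qed.

End D.


Section P.
Variable C : numClosedFieldType.

Lemma trmxC_mul m n p (A : 'M[C]_(m, n)) (B : 'M[C]_(n, p)) :
  (A *m B)^t* = B^t* *m A^t*.
Proof. by rewrite trmx_mul map_mxM. Qed.

Lemma quad_ge0_diag k (u : 'rV[C]_k) (d : 'rV[C]_k) : (forall i, 0 <= d 0 i) ->
  0 <= (u *m diag_mx d *m u^t*) 0 0.
Proof.
move=> hd; rewrite mxE; apply: sumr_ge0 => i _.
rewrite mul_mx_diag !mxE.
by rewrite mulrAC; apply: mulr_ge0 => //; rewrite mul_conjC_ge0.
Qed.

Lemma psd_fact n k (V : 'M[C]_(n, k)) (d : 'rV[C]_k) : (forall i, 0 <= d 0 i) ->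
  psd (V *m diag_mx d *m V^t*).
Proof.
move=> hd; split.
  rewrite !trmxC_mul trmxCK mulmxA; congr (_ *m _ *m _).
  apply/matrixP => i j; rewrite !mxE eq_sym; case: eqP => [->|_]; last by rewrite mulr0n rmorph0.
  by rewrite !mulr1n geC0_conj.
move=> v; rewrite -!mulmxA mulmxA.
have -> : V^t* *m v = (v^t* *m V)^t* by rewrite trmxC_mul trmxCK.
rewrite mulmxA; exact: quad_ge0_diag.
Qed.

Definition qf n (M : 'M[C]_n) (x y : 'cV[C]_n) : C := (x^t* *m M *m y) 0 0.

Lemma form_add n (M : 'M[C]_n) (w e : 'cV[C]_n) (c : C) :
  qf M (w + c *: e) (w + c *: e) =
  qf M w w + c * qf M w e + c^* * qf M e w + c^* * c * qf M e e.
Proof.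
rewrite /qf.
have -> : (w + c *: e)^t* = w^t* + c^* *: e^t*.
  by apply/matrixP => i j; rewrite !mxE rmorphD rmorphM.
rewrite !mulmxDl !mulmxDr -!scalemxAl -!scalemxAr !mxE.
by rewrite !addrA mulrA.
Qed.

Lemma form_conj n (M : 'M[C]_n) (x y : 'cV[C]_n) : M^t* = M ->
  qf M y x = (qf M x y)^*.
Proof.
move=> hM; rewrite /qf.
have -> : (qf M x y)^* = ((x^t* *m M *m y)^t*) 0 0 by rewrite /qf !mxE.
by rewrite !trmxC_mul trmxCK hM mulmxA.
Qed.

Lemma psd_ker n (M : 'M[C]_n) (w : 'cV[C]_n) : psd M -> qf M w w = 0 -> M *m w = 0.
Proof.
move=> [hH hP] hw; apply/matrixP => i j; rewrite (ord1 j) [RHS]mxE.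
set e : 'cV[C]_n := delta_mx i 0.
have ez : qf M e w = (M *m w) i 0.
  rewrite /qf -mulmxA.
  have -> : e^t* = delta_mx 0 i by rewrite /e trmx_delta map_delta_mx.
  by rewrite -rowE mxE.
set z := (M *m w) i 0 in ez *.
set q := qf M e e.
have q0 : 0 <= q by exact: hP.
set t : C := (q + 1)^-1.
have t0 : 0 < t by rewrite invr_gt0 ltr_wpDl.
have tq : t * q <= 1.
  by rewrite /t mulrC ler_pdivrMr ?ltr_wpDl // mul1r lerDl.
have := hP (w + (- (t * z)) *: e); rewrite -/(qf M _ _) form_add hw.
rewrite (form_conj e w hH) ez add0r -/q.
have tc : t^* = t by rewrite geC0_conj // ltW.
rewrite !rmorphN !rmorphM /= tc.
set zz := z * z^*.
have zz0 : 0 <= zz by exact: mul_conjC_ge0.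
have -> : - (t * z) * z^* = - (t * zz) by rewrite mulNr mulrA.
have -> : - (t * z^*) * z = - (t * zz) by rewrite mulNr -mulrA [z^* * z]mulrC.
have -> : - (t * z^*) * - (t * z) * q = t * zz * (t * q).
  by rewrite mulrNN mulrACA [z^* * z]mulrC mulrAC -!mulrA.
move=> h.
have h2 : t * zz * (t * q) <= t * zz by apply: ler_piMr => //; apply: mulr_ge0 => //; exact: ltW.
have : t * zz <= 0.
  have h3 : 0 <= - (t * zz) - (t * zz) + t * zz by apply: (le_trans h); rewrite lerD2l.
  by rewrite addrAC addNr add0r oppr_ge0 in h3.
move=> h4; have : t * zz = 0.
  by apply/eqP; rewrite eq_le h4 /=; apply: mulr_ge0 => //; exact: ltW.
move/eqP; rewrite mulf_eq0 (negbTE (lt0r_neq0 t0)) /= /zz mul_conjC_eq0.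
by move/eqP.
Qed.

End P.


Section E.
Variable C : numClosedFieldType.
Variable m : nat.
Local Notation N := m.+2.
Local Notation Dm := (@Dm C m).
Local Notation lam := (@lam C m).

Definition Vm : 'M[C]_(N * N, N) :=
  \matrix_(p, k) (supp (tidx p) && (colo (tidx p) == k))%:R.
Definition lamr : 'rV[C]_N := \row_k lam k.

Lemma beta_gt0 : 0 < beta C m.
Proof. by rewrite /beta invr_gt0 mulr_gt0 ?ltr0Sn. Qed.

Lemma lam_ge0 k : 0 <= lam k.
Proof.
rewrite /lam; case: ifP => _; last exact: ltW beta_gt0.
by rewrite /alpha mulr_ge0 ?ler0n // ltW // beta_gt0.
Qed.

Lemma Dm_fact : Dm = Vm *m diag_mx lamr *m Vm^t*.
Proof.
apply/matrixP => p q; rewrite -(tidxK p) -(tidxK q) DmE !mxE.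
set x := tidx p; set y := tidx q.
rewrite (bigD1 (colo x)) //= big1 ?addr0; last first.
  move=> k nk; rewrite mul_mx_diag !mxE pidxK.
  by rewrite [colo x == k]eq_sym (negbTE nk) andbF mul0r mul0r.
rewrite mul_mx_diag !mxE !pidxK eqxx andbT conjC_nat /Dent.
case: (supp x) => /=; last by rewrite !mul0r.
rewrite mul1r; case: (supp y) => /=; last by rewrite mulr0.
by rewrite [colo y == _]eq_sym; case: eqP => _; rewrite ?mulr1 ?mulr0.
Qed.

Lemma Dm_psd : psd Dm.
Proof. by rewrite Dm_fact; apply: psd_fact => i; rewrite mxE; apply: lam_ge0. Qed.

Lemma Dent_swap (a b a' b' : 'I_N) : Dent C (b, a) (b', a') = Dent C (a, b) (a', b').
Proof. by rewrite /Dent (supp_swap a b) (supp_swap a' b') (colo_swap a b) (colo_swap a' b'). Qed.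

Lemma T2_Dm a a' : T2 Dm a a' = (a == a')%:R / N%:R.
Proof.
rewrite /T2; under eq_bigr do rewrite DmE.
have [<-|na] := eqVneq a a'; first by rewrite Dent_diag_sum mul1r.
rewrite mul0r big1 // => b _; rewrite /Dent; case: ifP => //.
case/and3P => s1 s2 /eqP ec; have /(congr1 fst) /= e1 := inj2 s1 s2 ec erefl.
by rewrite e1 eqxx in na.
Qed.

Lemma T1_Dm b b' : T1 Dm b b' = (b == b')%:R / N%:R.
Proof.
rewrite /T1 -T2_Dm /T2; apply: eq_bigr => a _.
by rewrite !DmE Dent_swap.
Qed.

Lemma Dm_tr : \tr Dm = 1.
Proof.
rewrite /mxtrace sum_pidx.
rewrite (eq_bigr (fun _ => N%:R^-1)); last first.
  by move=> a _; rewrite -(Dent_diag_sum C a); apply: eq_bigr => b _; rewrite DmE.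
by rewrite sumr_const card_ord -[_ *+ _]mulr_natl mulfV // pnatr_eq0.
Qed.

Lemma Dm_Gamma : in_Gamma Dm.
Proof.
split; first by split; [exact: Dm_psd | exact: Dm_tr].
split => A.
  rewrite trK1 /ntr /mxtrace mulr_suml; apply: eq_bigr => a _.
  rewrite (bigD1 a) //= [X in _ + X]big1 ?addr0; first by rewrite T2_Dm eqxx mul1r.
  by move=> a' na; rewrite T2_Dm eq_sym (negbTE na) mul0r mulr0.
rewrite trK2 /ntr /mxtrace mulr_suml; apply: eq_bigr => a _.
rewrite (bigD1 a) //= [X in _ + X]big1 ?addr0; first by rewrite T1_Dm eqxx mul1r.
by move=> a' na; rewrite T1_Dm eq_sym (negbTE na) mul0r mulr0.
Qed.

End E.


Section R.
Variable C : numClosedFieldType.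
Variable m : nat.
Local Notation N := m.+2.
Local Notation Dm := (@Dm C m).
Local Notation lam := (@lam C m).

Definition rep (k : 'I_N) : 'I_N * 'I_N :=
  if k == ord0 then (ord_max, ord_max) else (ord0, k).

Lemma supp_rep k : supp (rep k).
Proof.
rewrite /rep; case: (k =P ord0) => [_|/eqP nk]; rewrite /supp /=; first by rewrite eqxx.
by rewrite eq_sym (negbTE nk).
Qed.

Lemma colo_rep k : colo (rep k) = k.
Proof.
rewrite /rep; case: (k =P ord0) => [->|nk]; rewrite /colo //=.
Qed.

Definition Rm : 'M[C]_(N, N * N) := \matrix_(k, p) (p == pidx (rep k))%:R.

Lemma RmM n (M : 'M[C]_(N * N, n)) k q : (Rm *m M) k q = M (pidx (rep k)) q.
Proof.
rewrite mxE (bigD1 (pidx (rep k))) //= big1 ?addr0; first by rewrite mxE eqxx mul1r.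
by move=> p np; rewrite mxE (negbTE np) mul0r.
Qed.

Lemma lam_neq0 k : (0 < m)%N -> lam k != 0.
Proof.
move=> m0; rewrite /lam; case: ifP => _; last by rewrite lt0r_neq0 // beta_gt0.
by rewrite /alpha mulf_neq0 ?pnatr_eq0 -?lt0n // lt0r_neq0 // beta_gt0.
Qed.

Lemma RDR : Rm *m Dm *m Rm^T = diag_mx (lamr C m).
Proof.
apply/matrixP => k l; rewrite mxE.
rewrite (bigD1 (pidx (rep l))) //= big1 ?addr0; last first.
  by move=> q nq; rewrite [Rm^T _ _]mxE [Rm l q]mxE (negbTE nq) mulr0.
rewrite [Rm^T _ _]mxE [Rm l _]mxE eqxx mulr1 RmM DmE /Dent !supp_rep !colo_rep /=.
by rewrite !mxE; case: eqP => [->|]; rewrite ?mulr1n ?mulr0n.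
Qed.

Lemma rank_Dm : (0 < m)%N -> \rank Dm = N.
Proof.
move=> m0; apply/eqP; rewrite eqn_leq.
have -> : (\rank Dm <= N)%N.
  by rewrite Dm_fact; apply: leq_trans (mxrankM_maxr _ _) (rank_leq_row _).
have h : \rank (diag_mx (lamr C m)) = N.
  apply: mxrank_unit; rewrite unitmxE det_diag unitfE.
  by apply/prodf_neq0 => i _; rewrite mxE lam_neq0.
rewrite -{1}h -RDR; apply: (leq_trans (mxrankM_maxl _ _)).
exact: mxrankM_maxr.
Qed.

End R.


Section K.
Variable C : numClosedFieldType.

Lemma form_lin n (A B : 'M[C]_n) t s w :
  qf (t *: A + s *: B) w w = t * qf A w w + s * qf B w w.
Proof.
by rewrite /qf mulmxDr mulmxDl -!scalemxAr -!scalemxAl !mxE.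
Qed.

Lemma mul_delta_col n (M : 'M[C]_n) (q r : 'I_n) : (M *m (delta_mx q 0 : 'cV_n)) r 0 = M r q.
Proof. by rewrite -colE mxE. Qed.

Lemma form_delta n (M : 'M[C]_n) p q :
  qf M (delta_mx p 0) (delta_mx q 0) = M p q.
Proof.
rewrite /qf -mulmxA.
have -> : (delta_mx p 0 : 'cV[C]_n)^t* = delta_mx 0 p by rewrite trmx_delta map_delta_mx.
by rewrite -rowE mxE mul_delta_col.
Qed.

Lemma ker_step n (D1 D2 : 'M[C]_n) t w : psd D1 -> psd D2 -> 0 < t -> t < 1 ->
  qf (t *: D1 + (1 - t) *: D2) w w = 0 -> D1 *m w = 0.
Proof.
move=> P1 P2 t0 t1; rewrite form_lin => h.
have f1 : 0 <= qf D1 w w by case: P1 => _; apply.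
have f2 : 0 <= qf D2 w w by case: P2 => _; apply.
have g1 : 0 <= t * qf D1 w w by rewrite mulr_ge0 // ltW.
have g2 : 0 <= (1 - t) * qf D2 w w by rewrite mulr_ge0 // subr_ge0 ltW.
move/eqP: h; rewrite paddr_eq0 // => /andP [/eqP h1 _].
apply: psd_ker => //.
by move/eqP: h1; rewrite mulf_eq0 (negbTE (lt0r_neq0 t0)) /= => /eqP.
Qed.

End K.


Section Core.
Variable C : numClosedFieldType.
Variable m : nat.
Local Notation N := m.+2.
Local Notation Dm := (@Dm C m).
Local Notation lam := (@lam C m).
Variable D1 : 'M[C]_(N * N).
Hypothesis K : forall w, qf Dm w w = 0 -> D1 *m w = 0.
Hypothesis H : D1^t* = D1.
Hypothesis G1 : in_Gamma D1.

Lemma herm p r : D1 p r = (D1 r p)^*.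
Proof. by rewrite -{1}H !mxE. Qed.

Lemma colz x r : ~~ supp x -> D1 r (pidx x) = 0.
Proof.
move=> nx; have := K (w := delta_mx (pidx x) 0).
rewrite form_delta DmE Dent_xx (negbTE nx) => /(_ erefl) /matrixP /(_ r 0).
by rewrite mul_delta_col mxE.
Qed.

Lemma rowz x r : ~~ supp x -> D1 (pidx x) r = 0.
Proof. by move=> nx; rewrite herm colz // rmorph0. Qed.

Lemma coleq x y r : supp x -> supp y -> colo x = colo y ->
  D1 r (pidx x) = D1 r (pidx y).
Proof.
move=> sx sy cxy.
have := K (w := delta_mx (pidx x) 0 + (-1) *: delta_mx (pidx y) 0).
rewrite form_add !form_delta !DmE /Dent sx sy cxy eqxx /=.
rewrite rmorphN1 mulrNN !mulN1r !mul1r subrr add0r addNr.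
move=> /(_ erefl) /matrixP /(_ r 0).
rewrite mulmxDr -scalemxAr mxE [X in _ + X]mxE !mul_delta_col mulN1r.
by rewrite mxE => /eqP; rewrite subr_eq0 => /eqP.
Qed.

Definition G (k l : 'I_N) := D1 (pidx (rep k)) (pidx (rep l)).

Lemma D1form x y :
  D1 (pidx x) (pidx y) = if supp x && supp y then G (colo x) (colo y) else 0.
Proof.
case sx: (supp x); last by rewrite rowz ?sx.
case sy: (supp y); last by rewrite colz ?sy.
rewrite /= /G (coleq (pidx x) sy (supp_rep _) (esym (colo_rep _))).
rewrite herm (coleq _ sx (supp_rep _) (esym (colo_rep _))).
by rewrite -herm.
Qed.

Lemma uniq_row (a l k : 'I_N) : l != k -> supp (a, l) -> supp (a, k) ->
  a = (if l == ord0 then k else if k == ord0 then l else ord0).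
Proof.
rewrite /supp /=.
by do ![case: eqP => /= [?|?]; subst] => //; try congruence.
Qed.

Definition a0 (l k : 'I_N) := if l == ord0 then k else if k == ord0 then l else ord0.

Lemma a0_supp l k : l != k -> supp (a0 l k, l) && supp (a0 l k, k).
Proof.
rewrite /a0; case: (l =P ord0) => [->|nl]; case: (k =P ord0) => [->|nk] //=;
  rewrite /supp /=;
  by do ![case: eqP => /= [?|?]; subst] => //; try congruence.
Qed.

Lemma a0_colo l k : l != k ->
  (colo (a0 l k, l), colo (a0 l k, k)) =
  (if l == ord0 then (k, ord0) else if k == ord0 then (ord0, l) else (l, k)).
Proof.
rewrite /a0; case: (l =P ord0) => [->|nl]; case: (k =P ord0) => [->|nk] //=;
  rewrite /colo /=;
  by do ![case: eqP => /= [?|?]; subst] => //; try congruence.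
Qed.

Lemma T1_off l k : l != k -> T1 D1 l k = G (colo (a0 l k, l)) (colo (a0 l k, k)).
Proof.
move=> nlk; rewrite /T1; under eq_bigr do rewrite D1form.
rewrite (bigD1 (a0 l k)) //= big1 ?addr0; first by rewrite a0_supp.
move=> a na; case: ifP => // /andP [s1 s2].
by have := uniq_row nlk s1 s2; rewrite -/(a0 l k) => e; rewrite e eqxx in na.
Qed.

Lemma G_off k l : k != l -> G k l = 0.
Proof.
move=> nkl.
have T0 : forall l' k', l' != k' -> T1 D1 l' k' = 0.
  by move=> l' k' nlk; rewrite (Gamma_T1 G1) eq_sym (negbTE nlk) mul0r.
have [k0|k0] := eqVneq k ord0.
  subst k; have nl : l != ord0 by rewrite eq_sym.
  have nl0 : l != ord0 by [].
  move: (T0 l ord0 nl); rewrite T1_off //.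
  by move: (a0_colo nl); rewrite (negbTE nl) eqxx => -[-> ->].
have [l0|l0] := eqVneq l ord0.
  subst l; have nk : ord0 != k by rewrite eq_sym.
  move: (T0 ord0 k nk); rewrite T1_off //.
  by move: (a0_colo nk); rewrite eqxx => -[-> ->].
move: (T0 k l nkl); rewrite T1_off //.
by move: (a0_colo nkl); rewrite (negbTE k0) (negbTE l0) => -[-> ->].
Qed.

Lemma T2diag a : \sum_b (if supp (a, b) then G (colo (a, b)) (colo (a, b)) else 0) = N%:R^-1.
Proof.
have := Gamma_T2 G1 a a; rewrite eqxx mul1r /T2 => <-.
by apply: eq_bigr => b _; rewrite D1form andbb.
Qed.

Lemma diag0 : \sum_(b < m.+1) G (lift ord0 b) (lift ord0 b) = N%:R^-1.
Proof.
rewrite -(T2diag ord0) [RHS]big_ord_recl /= /supp /=.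
by rewrite add0r; apply: eq_bigr => b _; rewrite /colo /=.
Qed.

Lemma diaga a : a != ord0 -> G ord0 ord0 + G a a = N%:R^-1.
Proof.
move=> na; rewrite -(T2diag a) (bigD1 a) //= (bigD1 ord0) 1?eq_sym //= big1.
- rewrite /supp /colo /= !eqxx !(negbTE na) /= ?eqxx ?(negbTE na).
  by rewrite addr0.
- move=> b /andP [nba nb0]; rewrite /supp /= eq_sym (negbTE nba) (negbTE na).
  by rewrite (negbTE nb0).
Qed.

Lemma G_diag k : G k k = lam k.
Proof.
have hb : N%:R^-1 - G ord0 ord0 = beta C m.
  apply: (@mulfI _ (m.+1)%:R); first by rewrite pnatr_eq0.
  rewrite beta_sum.
  transitivity (\sum_(b < m.+1) (N%:R^-1 - G ord0 ord0)).
    by rewrite sumr_const card_ord mulr_natl.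
  rewrite -[RHS]diag0; apply: eq_bigr => b _.
  have nb : lift ord0 b != ord0 by rewrite eq_sym; exact: neq_lift.
  by rewrite -(diaga nb) addrC addKr.
rewrite /lam; case: eqP => [->|/eqP nk].
  apply/esym; have := alpha_beta C m; rewrite -hb.
  by move/(canRL (addrK _)) => ->; rewrite opprB addrC subrK.
by rewrite -hb -(diaga nk) addrC addKr.
Qed.

Lemma D1_eq : D1 = Dm.
Proof.
apply/matrixP => p q; rewrite -(tidxK p) -(tidxK q) D1form DmE /Dent.
set x := tidx p; set y := tidx q.
case sx: (supp x); case sy: (supp y) => //=.
case: eqP => [->|/eqP n]; first by rewrite G_diag.
by rewrite G_off.
Qed.

End Core.


Lemma extr_one (C : numClosedFieldType) m (D1 D2 : 'M[C]_(m.+2 * m.+2)) t :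
  in_Gamma D1 -> in_Gamma D2 -> 0 < t -> t < 1 ->
  Dm C m = t *: D1 + (1 - t) *: D2 -> D1 = Dm C m.
Proof.
move=> g1 g2 t0 t1 e.
have P1 : psd D1 by case: g1 => [[]].
have P2 : psd D2 by case: g2 => [[]].
apply: D1_eq => //; last by case: P1.
by move=> w; rewrite e; apply: ker_step.
Qed.

Unset Implicit Arguments.
Theorem theorem2p7 (C : numClosedFieldType) (n : nat) (hn : (5 <= n)%N) :
  exists D : 'M[C]_(n * n), extremal_Gamma D /\ \rank D = n.
Proof.
case: n hn => [|[|m]] // hn.
exists (Dm C m); split; last by apply: rank_Dm; case: m hn.
split; first exact: Dm_Gamma.
move=> D1 D2 t g1 g2 t0 t1 e; split; first exact: (extr_one g1 g2 t0 t1 e).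
apply: (extr_one g2 g1 (t := 1 - t)).
- by rewrite subr_gt0.
- by rewrite ltrBlDr ltrDl.
- by rewrite subKr addrC.
Qed.
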